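(* Let $k\geq 1$ and $p$ a propositional variable. Then $\mathbf{GLP}\vdash[1]Q^k(p)$, and $Q^k(p)$ is a conjunction of $k$ instances of reflection $[0]\chi\to\chi$. Moreover, if $\sigma$ is a substitution such that $\mathbf{GLP}\vdash\bigwedge_{i=1}^j([0]\psi_i\to\psi_i)\to\sigma(p)$ for some $j\leq k$ and some formulas $\psi_1,\dots,\psi_j$, then $\sigma$ is a unifier of $[1]p$ and $\sigma\leq Q^k$. That is, $Q^k$ is the most general unifier of $[1]p$ among those following from at most $k$ instances of reflection.
   Context: $\mathbf{GLP}$ is the propositional polymodal logic with modalities $[0],[1],\dots$ ($\langle k\rangle:=\neg[k]\neg$) axiomatized by classical tautologies; $[k](\phi\to\psi)\to([k]\phi\to[k]\psi)$; $[k]([k]\phi\to\phi)\to[k]\phi$; $\langle j\rangle\phi\to[k]\langle j\rangle\phi$ for $j<k$; $[j]\phi\to[k]\phi$ for $j\leq k$; rules modus ponens and necessitation. A substitution commutes with all connectives and modalities; a unifier of $[1]p$ is a substitution $\sigma$ with $\mathbf{GLP}\vdash[1]\sigma(p)$. $\tau\leq\sigma$ means there is a substitution $\theta$ with $\mathbf{GLP}\vdash\tau(q)\leftrightarrow\theta(\sigma(q))$ for every variable $q$; $Q^k$ also denotes the substitution $p\mapsto Q^k(p)$. Define $Q_1(p):=p$, $Q_{i+1}(p):=p\lor[0]Q_i(p)$, $Q^k(p):=\bigwedge_{i=1}^k([0]Q_i(p)\to Q_i(p))$. *)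

(* Defs.v *)
From Stdlib Require Import Arith List PeanoNat.
Import ListNotations.

Inductive form : Type :=
| Var : nat -> form
| Bot : form
| Imp : form -> form -> form
| Box : nat -> form -> form.

Definition Neg (a : form) : form := Imp a Bot.
Definition Top : form := Neg Bot.
Definition Or (a b : form) : form := Imp (Neg a) b.
Definition And (a b : form) : form := Neg (Imp a (Neg b)).
Definition Iff (a b : form) : form := And (Imp a b) (Imp b a).
Definition Dia (k : nat) (a : form) : form := Neg (Box k (Neg a)).

(* Classical tautologies: formulas true under every boolean valuation in which
   variables and modal formulas [k]phi are treated as propositional atoms. *)
Fixpoint beval (v : form -> bool) (f : form) : bool :=
  match f with
  | Var n => v (Var n)
  | Bot => false
  | Imp a b => implb (beval v a) (beval v b)
  | Box k a => v (Box k a)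
  end.

Definition tautology (f : form) : Prop := forall v : form -> bool, beval v f = true.

Inductive GLP : form -> Prop :=
| glp_taut : forall f, tautology f -> GLP f
| glp_K : forall k a b, GLP (Imp (Box k (Imp a b)) (Imp (Box k a) (Box k b)))
| glp_L : forall k a, GLP (Imp (Box k (Imp (Box k a) a)) (Box k a))
| glp_neg : forall j k a, j < k -> GLP (Imp (Dia j a) (Box k (Dia j a)))
| glp_mono : forall j k a, j <= k -> GLP (Imp (Box j a) (Box k a))
| glp_mp : forall a b, GLP (Imp a b) -> GLP a -> GLP b
| glp_nec : forall k a, GLP a -> GLP (Box k a).

Definition subst := nat -> form.

Fixpoint apply_subst (s : subst) (f : form) : form :=
  match f with
  | Var n => s n
  | Bot => Bot
  | Imp a b => Imp (apply_subst s a) (apply_subst s b)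
  | Box k a => Box k (apply_subst s a)
  end.

(* tau <= sigma : tau is an instance of sigma modulo GLP-equivalence. *)
Definition subst_le (tau sigma : subst) : Prop :=
  exists theta : subst, forall q : nat,
    GLP (Iff (tau q) (apply_subst theta (sigma q))).

Definition unifier_Box1 (p : nat) (sigma : subst) : Prop :=
  GLP (Box 1 (sigma p)).

Fixpoint bigAnd (l : list form) : form :=
  match l with
  | [] => Top
  | [x] => x
  | x :: xs => And x (bigAnd xs)
  end.

Definition refl0 (chi : form) : form := Imp (Box 0 chi) chi.

Fixpoint Qi (i : nat) (f : form) : form :=
  match i with
  | 0 => f (* unused: indices start at 1 *)
  | 1 => f
  | S i' => Or f (Box 0 (Qi i' f))
  end.

Definition Qk (k : nat) (f : form) : form :=
  bigAnd (map (fun i => refl0 (Qi i f)) (seq 1 k)).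

Definition Qsubst (k p : nat) : subst :=
  fun q => if Nat.eqb q p then Qk k (Var p) else Var q.

(* Main.v *)
Require Import Defs.
From Stdlib Require Import Arith List Lia Bool.
Import ListNotations.

Lemma beval_bigAnd v l : beval v (bigAnd l) = forallb (beval v) l.
Proof.
  induction l as [|a l IH]; [reflexivity|].
  destruct l as [|b l].
  - simpl. now rewrite andb_true_r.
  - change (bigAnd (a :: b :: l)) with (And a (bigAnd (b :: l))).
    unfold And, Neg. cbn [beval]. rewrite IH.
    change (forallb (beval v) (a :: b :: l)) with (beval v a && forallb (beval v) (b :: l)).
    destruct (beval v a), (forallb (beval v) (b :: l)); reflexivity.
Qed.

Lemma apply_subst_bigAnd s l :
  apply_subst s (bigAnd l) = bigAnd (map (apply_subst s) l).
Proof.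
  induction l as [|a l IH]; [reflexivity|].
  destruct l as [|b l]; [reflexivity|].
  change (bigAnd (a :: b :: l)) with (And a (bigAnd (b :: l))).
  change (bigAnd (map (apply_subst s) (a :: b :: l))) with
    (And (apply_subst s a) (bigAnd (map (apply_subst s) (b :: l)))).
  rewrite <- IH. reflexivity.
Qed.

Lemma apply_subst_Qi s i p : apply_subst s (Qi i (Var p)) = Qi i (s p).
Proof.
  induction i as [|i IH]; [reflexivity|].
  destruct i as [|i]; [reflexivity|].
  change (Qi (S (S i)) (Var p)) with (Or (Var p) (Box 0 (Qi (S i) (Var p)))).
  change (Qi (S (S i)) (s p)) with (Or (s p) (Box 0 (Qi (S i) (s p)))).
  unfold Or, Neg. cbn [apply_subst]. rewrite IH. reflexivity.
Qed.

Arguments bigAnd : simpl never.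

Ltac tauto_b :=
  let v := fresh "v" in
  intro v; unfold Iff, And, Or, Top, Dia, Neg, refl0 in *; simpl;
  rewrite ?beval_bigAnd, ?map_app, ?forallb_app; simpl;
  repeat match goal with
  | |- context [beval v ?a] => destruct (beval v a)
  | |- context [forallb ?f ?l] => destruct (forallb f l)
  | |- context [v ?a] => destruct (v a)
  end; reflexivity.

Lemma taut_mp1 a c : tautology (Imp a c) -> GLP a -> GLP c.
Proof. intros T H. exact (glp_mp _ _ (glp_taut _ T) H). Qed.
Lemma taut_mp2 a b c : tautology (Imp a (Imp b c)) -> GLP a -> GLP b -> GLP c.
Proof. intros T H1 H2. exact (glp_mp _ _ (glp_mp _ _ (glp_taut _ T) H1) H2). Qed.
Lemma taut_mp3 a b d c : tautology (Imp a (Imp b (Imp d c))) -> GLP a -> GLP b -> GLP d -> GLP c.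
Proof. intros T H1 H2 H3. exact (glp_mp _ _ (glp_mp _ _ (glp_mp _ _ (glp_taut _ T) H1) H2) H3). Qed.
Lemma taut_mp4 a b d e c : tautology (Imp a (Imp b (Imp d (Imp e c)))) -> GLP a -> GLP b -> GLP d -> GLP e -> GLP c.
Proof. intros T H1 H2 H3 H4.
  exact (glp_mp _ _ (glp_mp _ _ (glp_mp _ _ (glp_mp _ _ (glp_taut _ T) H1) H2) H3) H4). Qed.

Lemma imp_trans a b c : GLP (Imp a b) -> GLP (Imp b c) -> GLP (Imp a c).
Proof. apply taut_mp2. tauto_b. Qed.

Lemma box_mono k a b : GLP (Imp a b) -> GLP (Imp (Box k a) (Box k b)).
Proof. intro H. apply (glp_mp _ _ (glp_K k a b)). now apply glp_nec. Qed.

Lemma box_and k a b : GLP (Imp (Box k a) (Imp (Box k b) (Box k (And a b)))).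
Proof.
  assert (H1 : GLP (Imp (Box k a) (Box k (Imp b (And a b))))).
  { apply box_mono. apply glp_taut. tauto_b. }
  pose proof (glp_K k b (And a b)) as H2.
  revert H1 H2. apply taut_mp2. tauto_b.
Qed.

Lemma box4 k a : GLP (Imp (Box k a) (Box k (Box k a))).
Proof.
  set (c := And a (Box k a)).
  assert (H1 : GLP (Imp (Box k c) (Box k a))) by (apply box_mono; apply glp_taut; unfold c; tauto_b).
  assert (H2 : GLP (Imp a (Imp (Box k c) c))) by (revert H1; apply taut_mp1; unfold c; tauto_b).
  apply box_mono with (k := k) in H2.
  pose proof (glp_L k c) as H3.
  assert (H4 : GLP (Imp (Box k c) (Box k (Box k a)))) by (apply box_mono; apply glp_taut; unfold c; tauto_b).
  eapply imp_trans; [exact H2|]. eapply imp_trans; [exact H3|exact H4].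
Qed.

Lemma box1_refl a : GLP (Box 1 (refl0 a)).
Proof.
  pose proof (glp_neg 0 1 (Neg a) ltac:(lia)) as h1.
  assert (h2 : GLP (Imp (Box 0 a) (Box 0 (Neg (Neg a))))) by (apply box_mono; apply glp_taut; tauto_b).
  assert (h3 : GLP (Imp (Dia 0 (Neg a)) (refl0 a))) by (revert h2; apply taut_mp1; tauto_b).
  apply box_mono with (k := 1) in h3.
  pose proof (glp_mono 0 1 (Neg (Neg a)) ltac:(lia)) as h5.
  assert (h6 : GLP (Imp (Box 1 (Neg (Neg a))) (Box 1 (refl0 a)))) by (apply box_mono; apply glp_taut; tauto_b).
  revert h1 h3 h5 h6. apply taut_mp4. tauto_b.
Qed.

Lemma box_bigAnd k l : (forall e, In e l -> GLP (Box k e)) -> GLP (Box k (bigAnd l)).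
Proof.
  induction l as [|a l IH]; intro H.
  - apply glp_nec. apply glp_taut. tauto_b.
  - pose proof (box_and k a (bigAnd l)) as h.
    assert (h2 : GLP (Imp (Box k (And a (bigAnd l))) (Box k (bigAnd (a :: l))))).
    { apply box_mono. apply glp_taut. tauto_b. }
    pose proof (H a (or_introl eq_refl)) as ha.
    pose proof (IH (fun e He => H e (or_intror He))) as hl.
    revert h h2 ha hl. apply taut_mp4. tauto_b.
Qed.

Lemma bigAnd_intro c l : (forall e, In e l -> GLP (Imp c e)) -> GLP (Imp c (bigAnd l)).
Proof.
  induction l as [|a l IH]; intro H.
  - apply glp_taut. tauto_b.
  - pose proof (H a (or_introl eq_refl)) as ha.
    pose proof (IH (fun e He => H e (or_intror He))) as hl.
    revert ha hl. apply taut_mp2. tauto_b.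
Qed.

Lemma bigAnd_elim e l : In e l -> GLP (Imp (bigAnd l) e).
Proof.
  intro He. apply glp_taut. intro v. simpl. rewrite beval_bigAnd.
  destruct (forallb (beval v) l) eqn:E; [|reflexivity].
  rewrite forallb_forall in E. rewrite (E e He). reflexivity.
Qed.

Lemma disj L : forall C D,
  (forall psi, In psi L -> GLP (Imp C (Imp (Box 0 psi) D))) ->
  GLP (Imp C (Imp (bigAnd (map refl0 L)) D)) -> GLP (Imp C D).
Proof.
  induction L as [|psi L IH]; intros C D H0 H1.
  - revert H1. apply taut_mp1. tauto_b.
  - assert (H2 : GLP (Imp (And C (Neg (Box 0 psi))) D)).
    { apply IH.
      + intros phi Hphi. pose proof (H0 phi (or_intror Hphi)) as h. revert h.
        apply taut_mp1. tauto_b.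
      + revert H1. apply taut_mp1. tauto_b. }
    pose proof (H0 psi (or_introl eq_refl)) as h.
    revert h H2. apply taut_mp2. tauto_b.
Qed.

Lemma step B psi : GLP (Imp B (Box 0 B)) ->
  GLP (Imp (And B (Box 0 psi)) (Box 0 (And B (And psi (Box 0 psi))))).
Proof.
  intro HB.
  pose proof (box4 0 psi) as h1.
  pose proof (box_and 0 psi (Box 0 psi)) as h2.
  pose proof (box_and 0 B (And psi (Box 0 psi))) as h3.
  revert HB h1 h2 h3. apply taut_mp4. tauto_b.
Qed.

Lemma core n : forall L B x, length L < n -> GLP (Imp B (Box 0 B)) ->
  GLP (Imp B (Imp (bigAnd (map refl0 L)) x)) -> GLP (Imp B (Qi n x)).
Proof.
  induction n as [|n IH]; intros L B x Hlen HB H; [lia|].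
  destruct n as [|n].
  - destruct L; [|simpl in Hlen; lia].
    revert H. apply taut_mp1. simpl. tauto_b.
  - change (Qi (S (S n)) x) with (Or x (Box 0 (Qi (S n) x))).
    apply disj with (L := L).
    + intros psi Hin. destruct (in_split _ _ Hin) as [l1 [l2 ->]].
      set (B' := And B (And psi (Box 0 psi))).
      assert (HB' : GLP (Imp B' (Box 0 B'))).
      { eapply imp_trans; [|exact (step B psi HB)]. apply glp_taut. unfold B'. tauto_b. }
      assert (HQ : GLP (Imp B' (Qi (S n) x))).
      { apply (IH (l1 ++ l2)); [|exact HB'|].
        - rewrite length_app in *. simpl in Hlen. lia.
        - revert H. apply taut_mp1. unfold B'. tauto_b. }
      apply box_mono with (k := 0) in HQ.
      pose proof (step B psi HB) as hs.
      revert hs HQ. apply taut_mp2. unfold B'. tauto_b.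
    + revert H. apply taut_mp1. tauto_b.
Qed.

Lemma x_Qi x m : tautology (Imp x (Qi m x)).
Proof. destruct m as [|[|m]]; simpl; tauto_b. Qed.

Lemma main_equiv k x psis : length psis <= k ->
  GLP (Imp (bigAnd (map refl0 psis)) x) -> GLP (Iff x (Qk k x)).
Proof.
  intros Hl H.
  assert (HQ : GLP (Qi (S k) x)).
  { assert (h : GLP (Imp Top (Qi (S k) x))).
    { apply (core (S k) psis); [lia| |].
      - assert (GLP (Box 0 Top)) by (apply glp_nec; apply glp_taut; tauto_b).
        revert H0. apply taut_mp1. tauto_b.
      - revert H. apply taut_mp1. tauto_b. }
    revert h. apply taut_mp1. tauto_b. }
  assert (down : forall d, d <= k -> GLP (Imp (Qk k x) (Qi (S k - d) x))).
  { induction d as [|d IHd]; intro Hd.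
    - rewrite Nat.sub_0_r. revert HQ. apply taut_mp1. tauto_b.
    - specialize (IHd ltac:(lia)).
      destruct (k - d) as [|m] eqn:E; [lia|].
      replace (S k - d) with (S (S m)) in IHd by lia.
      replace (S k - S d) with (S m) by lia.
      change (Qi (S (S m)) x) with (Or x (Box 0 (Qi (S m) x))) in IHd.
      assert (hm : GLP (Imp (Qk k x) (refl0 (Qi (S m) x)))).
      { apply bigAnd_elim. apply in_map_iff. exists (S m). split; [reflexivity|].
        apply in_seq. lia. }
      pose proof (glp_taut _ (x_Qi x (S m))) as hx.
      revert IHd hm hx. apply taut_mp3. tauto_b. }
  pose proof (down k ltac:(lia)) as hd.
  replace (S k - k) with 1 in hd by lia. simpl in hd.
  assert (hi : GLP (Imp x (Qk k x))).
  { apply bigAnd_intro. intros e He. apply in_map_iff in He.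
    destruct He as [i [<- _]]. pose proof (glp_taut _ (x_Qi x i)) as h.
    revert h. apply taut_mp1. tauto_b. }
  revert hi hd. apply taut_mp2. tauto_b.
Qed.

Theorem mainTheorem12 (k : nat) (p : nat) (hk : 1 <= k) :
  GLP (Box 1 (Qk k (Var p)))
  /\ (exists chis : list form, length chis = k /\ Qk k (Var p) = bigAnd (map refl0 chis))
  /\ (forall sigma : subst,
        (exists (j : nat) (psis : list form),
            j <= k /\ length psis = j /\
            GLP (Imp (bigAnd (map refl0 psis)) (sigma p))) ->
        unifier_Box1 p sigma /\ subst_le sigma (Qsubst k p)).
Proof.
  split; [|split].
  - apply box_bigAnd. intros e He. apply in_map_iff in He.
    destruct He as [i [<- _]]. apply box1_refl.
  - exists (map (fun i => Qi i (Var p)) (seq 1 k)). split.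
    + now rewrite length_map, length_seq.
    + unfold Qk. now rewrite map_map.
  - intros sigma [j [psis [Hj [Hl H]]]]. split.
    + unfold unifier_Box1.
      assert (hb : GLP (Box 1 (bigAnd (map refl0 psis)))).
      { apply box_bigAnd. intros e He. apply in_map_iff in He.
        destruct He as [i [<- _]]. apply box1_refl. }
      exact (glp_mp _ _ (glp_mp _ _ (glp_K _ _ _) (glp_nec 1 _ H)) hb).
    + exists sigma. intro q. unfold Qsubst.
      destruct (Nat.eqb q p) eqn:E.
      * apply Nat.eqb_eq in E. subst q.
        unfold Qk. rewrite apply_subst_bigAnd, map_map.
        erewrite map_ext; [|intro i; unfold refl0; simpl; rewrite apply_subst_Qi; reflexivity].
        apply (main_equiv k (sigma p) psis); [lia|exact H].
      * simpl. apply glp_taut. tauto_b.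
Qed.
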